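(* Let $\mathcal{T}$ be a decision tree of depth $T$ whose edges are colored red and black such that every node has at most one outgoing black edge (edge to a child), and let $G$ be the maximum number of red edges on a root-to-leaf path. Then $\mathsf{WDT}(\mathcal{T})\le 3\sqrt{GT}$.
   Context: A decision tree is a finite rooted tree whose internal nodes each query a coordinate of the input (over a finite alphabet) and whose children correspond to distinct query outcomes; leaves carry outputs; its depth is the maximum number of edges on a root-to-leaf path. A weighting scheme for $\mathcal{T}$ is $w:V\to\mathbb{R}_{\ge0}$ such that $w_v=0$ for all leaves and, for every internal node $v$ with children $C_v$, there exist positive semidefinite $X,Y\in\mathbb{C}^{C_v\times C_v}$ with $X[c_1,c_2]-Y[c_1,c_2]=1$ for all distinct $c_1,c_2\in C_v$ and $w_v-w_c\ge X[c,c]+Y[c,c]$ for all $c\in C_v$. $\mathsf{WDT}(\mathcal{T})$ is the minimum of $w_{\mathrm{root}}$ over all weighting schemes. *)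

(* Defs.v *)
From HB Require Import structures.
From mathcomp Require Import all_boot all_order all_algebra.
From mathcomp Require Import complex.
From mathcomp Require Import all_classical all_reals.
Set Implicit Arguments. Unset Strict Implicit. Unset Printing Implicit Defensive.
Import Order.TTheory GRing.Theory Num.Theory.
Local Open Scope ring_scope.

(* A decision tree on inputs in A^n (A a finite alphabet) with outputs in O:
   a leaf carries an output; an internal node queries a coordinate i : 'I_n
   and has a list of children, each labelled by a query outcome. *)
Inductive dtree (n : nat) (A : finType) (O : Type) : Type :=
| DLeaf of O
| DNode of 'I_n & seq (A * dtree n A O).
Arguments DLeaf {n A O}.
Arguments DNode {n A O}.

Fixpoint dtree_wf {n A O} (t : @dtree n A O) : bool :=
  match t with
  | DLeaf _ => true
  | DNode _ cs =>
      [&& (0 < size cs)%N, uniq (map fst cs)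
        & (fix allwf (l : seq (A * dtree n A O)) : bool :=
             match l with [::] => true | c :: l' => dtree_wf c.2 && allwf l' end) cs]
  end.

(* Nodes are addressed by positions: the sequence of child indices along the
   path from the root ([::] is the root, rcons p c is the c-th child of p). *)
Fixpoint subtree {n A O} (t : @dtree n A O) (p : seq nat) : option (@dtree n A O) :=
  match p with
  | [::] => Some t
  | i :: p' =>
      match t with
      | DLeaf _ => None
      | DNode _ cs => obind (fun c => subtree c.2 p') (onth cs i)
      end
  end.

Definition is_node {n A O} (t : @dtree n A O) (p : seq nat) : Prop :=
  exists s, subtree t p = Some s.
Definition is_leaf {n A O} (t : @dtree n A O) (p : seq nat) : Prop :=
  exists o, subtree t p = Some (DLeaf o).

Definition conjT {R : rcfType} {k : nat} (X : 'M[R[i]]_k) : 'M[R[i]]_k :=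
  \matrix_(a, b) Num.conj (X b a).
Definition psd {R : rcfType} {k : nat} (X : 'M[R[i]]_k) : Prop :=
  conjT X = X /\
  forall v : 'cV[R[i]]_k, 0 <= ((map_mx Num.conj v)^T *m X *m v) ord0 ord0.

(* weighting scheme w : V -> R_{>=0} (only its values on nodes matter) *)
Definition weighting_scheme {R : rcfType} {n A O} (t : @dtree n A O)
    (w : seq nat -> R) : Prop :=
  (forall p, is_node t p -> 0 <= w p) /\
  (forall p, is_leaf t p -> w p = 0) /\
  (forall p q cs, subtree t p = Some (DNode q cs) ->
     exists X Y : 'M[R[i]]_(size cs),
       [/\ psd X, psd Y,
           (forall c1 c2 : 'I_(size cs), c1 != c2 -> X c1 c2 - Y c1 c2 = 1) &
           (forall c : 'I_(size cs),
               X c c + Y c c <= real_complex R (w p - w (rcons p c)))]).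

(* WDT(T) = min over weighting schemes of the root weight (taken as inf) *)
Definition WDT {R : realType} {n A O} (t : @dtree n A O) : R :=
  inf [set r : R | exists w : seq nat -> R, weighting_scheme t w /\ w [::] = r].

Definition is_max_nat (S : nat -> Prop) (m : nat) : Prop :=
  S m /\ forall k, S k -> (k <= m)%N.

Definition depth_is {n A O} (t : @dtree n A O) (T : nat) : Prop :=
  is_max_nat (fun k => exists p, is_leaf t p /\ size p = k) T.

(* an edge colouring: red e = true iff the edge entering the node at
   position e (nonempty) is red; false means black *)
Definition red_count (red : seq nat -> bool) (p : seq nat) : nat :=
  count red [seq take j p | j <- iota 1 (size p)].

Definition max_red_is {n A O} (t : @dtree n A O) (red : seq nat -> bool)
    (G : nat) : Prop :=
  is_max_nat (fun k => exists p, is_leaf t p /\ red_count red p = k) G.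

Definition at_most_one_black {n A O} (t : @dtree n A O)
    (red : seq nat -> bool) : Prop :=
  forall p q cs, subtree t p = Some (DNode q cs) ->
    (count (fun c => ~~ red (rcons p c)) (iota 0 (size cs)) <= 1)%N.

(* Main.v *)
Require Import Defs.
From HB Require Import structures.
From mathcomp Require Import all_boot all_order all_algebra.
From mathcomp Require Import complex.
From mathcomp Require Import all_classical all_reals.
From mathcomp Require Import ring lra.
Import Order.TTheory GRing.Theory Num.Theory.
Local Open Scope ring_scope.
Set Implicit Arguments. Unset Strict Implicit.

Section Tree.
Variables (n : nat) (A : finType) (O : Type).
Local Notation dt := (dtree n A O).

Inductive AllP (Q : dt -> Prop) : seq (A * dt) -> Prop :=
| AllP_nil : AllP Q [::]
| AllP_cons c l : Q c.2 -> AllP Q l -> AllP Q (c :: l).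

Lemma AllP_onth Q l i c : AllP Q l -> onth l i = Some c -> Q c.2.
Proof.
move=> H; elim: H i => [|c' l' Hc Hl IH] [|i] //=; last exact: IH.
by case=> <-.
Qed.

Definition dtree_ind' (P : dt -> Prop) (HL : forall o, P (DLeaf o))
  (HN : forall q cs, AllP P cs -> P (DNode q cs)) : forall t, P t :=
  fix F t := match t with
   | DLeaf o => HL o
   | DNode q cs => HN q cs ((fix G l : AllP P l :=
        match l with [::] => AllP_nil P | c :: l' => @AllP_cons P c l' (F c.2) (G l') end) cs)
  end.

Lemma wf_node q cs : dtree_wf (DNode q cs) ->
  (0 < size cs)%N /\ AllP (fun s => dtree_wf s) cs.
Proof.
rewrite /= => /and3P [H1 _ H]; split => //.
elim: cs {H1} H => [|c l IH] /=; first by constructor.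
by case/andP => H1 H2; constructor => //; apply: IH.
Qed.

Lemma onth_ex (T : Type) (l : seq T) i : (i < size l)%N -> exists x, onth l i = Some x.
Proof.
elim: l i => [|x l IH] [|i] //=; first by exists x.
by move=> H; apply: IH.
Qed.

Lemma subtree_rcons (t : dt) p q cs i c :
  subtree t p = Some (DNode q cs) -> onth cs i = Some c ->
  subtree t (rcons p i) = Some c.2.
Proof.
elim: p t => [|j p IH] t /=.
  by case=> -> /= ->.
case: t => // q' cs'; case: (onth cs' j) => //= c'.
exact: IH.
Qed.

Variables (R : rcfType) (cost : seq nat -> R).

Definition goF (f : dt -> seq nat -> R) (p : seq nat) :=
  fix go (l : seq (A * dt)) (i : nat) : R :=
    match l with
    | [::] => 0
    | c :: l' => Num.max (cost (rcons p i) + f c.2 (rcons p i)) (go l' i.+1)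
    end.

Fixpoint W (s : dt) (p : seq nat) {struct s} : R :=
  match s with
  | DLeaf _ => 0
  | DNode _ cs => goF W p cs 0
  end.

Lemma goF_ge0 f p l i : 0 <= goF f p l i.
Proof.
elim: l i => [|c l IH] i /=; first by [].
by rewrite le_max IH orbT.
Qed.

Lemma W_ge0 s p : 0 <= W s p.
Proof. by case: s => [o|q cs] /=; [|exact: goF_ge0]. Qed.

Lemma goF_ge f p l i j c : onth l j = Some c ->
  cost (rcons p (i + j)%N) + f c.2 (rcons p (i + j)%N) <= goF f p l i.
Proof.
elim: l i j => [|c' l IH] i [|j] //=.
  case=> ->; rewrite ?addn0 le_max; apply/orP; left; exact: lexx.
move=> H; rewrite le_max; apply/orP; right.
by rewrite -addSnnS; apply: IH.
Qed.

Lemma goF_cons f p c l i :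
  goF f p (c :: l) i = Num.max (cost (rcons p i) + f c.2 (rcons p i)) (goF f p l i.+1).
Proof. by []. Qed.

Lemma goF_le f p l i :
  (forall e s, 0 <= cost e + f s e) -> (0 < size l)%N ->
  exists j c, onth l j = Some c /\
    goF f p l i <= cost (rcons p (i + j)%N) + f c.2 (rcons p (i + j)%N).
Proof.
move=> Hnn; elim: l i => [|c l IH] i // _.
rewrite goF_cons.
case: l IH => [|c2 l] IH.
  exists 0%N, c; split => //; rewrite addn0.
  by rewrite ge_max lexx Hnn.
have [j [c' [H1 H2]]] := IH i.+1 isT.
set a := cost _ + _.
have [Hle|Hle] := leP a (goF f p (c2 :: l) i.+1).
  exists j.+1, c'; split => //.
  by rewrite -addSnnS.
exists 0%N, c; split => //; rewrite addn0; exact: lexx.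
Qed.

End Tree.


Lemma red_count_rcons red p j :
  red_count red (rcons p j) = (red_count red p + red (rcons p j))%N.
Proof.
rewrite /red_count size_rcons -(addn1 (size p)) iotaD map_cat count_cat /=.
congr (_ + _)%N.
  congr (count _ _); apply/eq_in_map => k; rewrite mem_iota => /andP [_ Hk].
  by rewrite -cats1 takel_cat // -ltnS -(addn1 (size p)) addnC.
rewrite add1n take_oversize ?size_rcons //.
by rewrite addn0.
Qed.

Lemma red_count_le red p : (red_count red p <= size p)%N.
Proof.
by rewrite /red_count (leq_trans (count_size _ _)) // size_map size_iota.
Qed.

Section Bound.
Variables (n : nat) (A : finType) (O : Type) (R : rcfType).
Variables (cost : seq nat -> R) (red : seq nat -> bool) (a b : R).
Hypothesis Hcost : forall e, cost e <= a + b * (red e)%:R.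
Hypothesis Hnn : forall e, 0 <= cost e.

Lemma W_bound (s : dtree n A O) : dtree_wf s -> forall p, exists e o,
  subtree s e = Some (DLeaf o) /\
  W cost s p <= a * (size e)%:R +
     b * ((red_count red (p ++ e))%:R - (red_count red p)%:R).
Proof.
elim/dtree_ind': s => [o|q cs IH] Hwf p.
  exists [::], o; split => //=; rewrite cats0 subrr !mulr0 addr0; exact: lexx.
have [Hsz Hall] := wf_node Hwf.
have [j [c [Hj Hle]]] := @goF_le _ _ _ _ cost (W cost) p cs 0%N
   (fun e s => addr_ge0 (Hnn e) (W_ge0 cost s e)) Hsz.
have Hwfc := AllP_onth Hall Hj.
have [e' [o [He' Hb]]] := AllP_onth IH Hj Hwfc (rcons p j).
exists (j :: e'), o; split; first by rewrite /= Hj.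
rewrite add0n in Hle.
rewrite /= -cat_rcons.
move: Hb; rewrite red_count_rcons natrD => Hb.
have Hc := Hcost (rcons p j).
apply: (le_trans Hle).
set x := (red_count red (rcons p j ++ e'))%:R in Hb *.
set y := (red_count red p)%:R in Hb *.
set z := ((red (rcons p j))%:R : R) in Hb Hc *.
rewrite -addn1 natrD.
lra.
Qed.

End Bound.


Lemma conj_rc (R : rcfType) (x : R) : Num.conj (real_complex R x) = real_complex R x.
Proof. by rewrite conj_Creal // complex_real. Qed.

Lemma psd_rank1 (R : rcfType) k (c : R) (u : 'I_k -> R) : 0 <= c ->
  psd (\matrix_(i, j) real_complex R (c * u i * u j)).
Proof.
move=> Hc; split.
  apply/matrixP => i j; rewrite !mxE conj_rc; congr (real_complex R _); ring.
move=> v.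
pose rc := real_complex R.
pose S := \sum_i rc (u i) * v i ord0.
have -> : ((map_mx Num.conj v)^T *m (\matrix_(i, j) rc (c * u i * u j)) *m v) ord0 ord0
   = rc c * (Num.conj S * S).
  rewrite mxE /S rmorph_sum /= big_distrl /= mulr_sumr.
  rewrite [RHS](eq_bigr (fun i => \sum_j rc c * (Num.conj (rc (u i) * v i ord0) * (rc (u j) * v j ord0)))); last first.
    by move=> i _; rewrite !mulr_sumr.
  rewrite exchange_big /=; apply: eq_bigr => j _.
  rewrite mxE big_distrl /=; apply: eq_bigr => i _.
  rewrite !mxE /rc !rmorphM /= conj_rc.
  ring.
apply: mulr_ge0; first by rewrite /rc lecR.
by rewrite mulrC mul_conjC_ge0.
Qed.


Lemma main_a (R : realType) n (A : finType) (O : Type) (t : dtree n A O)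
   (red : seq nat -> bool) (T G : nat) (a : R) :
  dtree_wf t -> depth_is t T -> at_most_one_black t red -> max_red_is t red G ->
  0 < a -> a <= 1 -> WDT (R := R) t <= a * T%:R + (2 / a - 1) * G%:R.
Proof.
move=> Hwf [[pT [HT1 HT2]] HT] HB [[pG [HG1 HG2]] HG] Ha0 Ha1.
pose eps := Num.sqrt a.
have heps : eps * eps = a by rewrite -expr2 sqr_sqrtr // ltW.
have eps0 : 0 < eps by rewrite sqrtr_gt0.
have epsn0 : eps != 0 by rewrite gt_eqF.
clearbody eps.
have an0 : a != 0 by rewrite gt_eqF.
pose b := 2 / a - 1.
have hb : 0 <= b.
  rewrite /b subr_ge0 ler_pdivlMr //; lra.
pose cost := fun e : seq nat => if red e then b else a.
have Hnn : forall e, 0 <= cost e by move=> e; rewrite /cost; case: (red e) => //; exact: ltW.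
have Hcost : forall e, cost e <= a + b * (red e)%:R.
  by move=> e; rewrite /cost; case: (red e) => /=; lra.
pose w := fun p => match subtree t p with Some s => W cost s p | None => 0 end.
have WS : weighting_scheme t w.
  split; [|split].
  - by move=> p [s Hs]; rewrite /w Hs; exact: W_ge0.
  - by move=> p [o Ho]; rewrite /w Ho.
  move=> p q cs Hp.
  pose u := fun i : 'I_(size cs) => if red (rcons p i) then eps^-1 else eps.
  pose y := fun i : 'I_(size cs) => if red (rcons p i) then 1 else 0 : R.
  exists (\matrix_(i, j) real_complex R (1 * u i * u j)),
         (\matrix_(i, j) real_complex R ((a^-1 - 1) * y i * y j)).
  split.
  - exact: psd_rank1.
  - apply: psd_rank1; rewrite subr_ge0 invf_ge1 //.
  - move=> c1 c2 Hne; rewrite !mxE -rmorphB /= -(rmorph1 (real_complex R)).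
    congr (real_complex R _).
    rewrite /u /y; case H1: (red (rcons p c1)); case H2: (red (rcons p c2)).
    all: try by rewrite -?heps; field; rewrite ?epsn0 ?an0.
    exfalso.
    have := HB p q cs Hp.
    suff : (2 <= count (fun c => ~~ red (rcons p c)) (iota 0 (size cs)))%N by case: count => [|[|]].
    rewrite -size_filter.
    apply: (@uniq_leq_size _ [:: val c1; val c2]).
      rewrite /= inE andbT; apply/negP => /eqP /val_inj H.
      by rewrite H eqxx in Hne.
    move=> x; rewrite !inE => /orP [] /eqP ->;
      by rewrite mem_filter mem_iota /= ?H1 ?H2 ltn_ord.
  - move=> c; rewrite !mxE -rmorphD /= lecR.
    have [x Hx] := onth_ex (ltn_ord c).
    have Hs := subtree_rcons Hp Hx.
    have E : W cost (DNode q cs) p = goF cost (W cost) p cs 0 by [].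
    rewrite /w Hp Hs E.
    have := goF_ge cost (W cost) p 0 Hx; rewrite add0n.
    have -> : 1 * u c * u c + (a^-1 - 1) * y c * y c = cost (rcons p c).
      rewrite /u /y /cost /b; case: (red (rcons p c)).
        by rewrite -heps; field; rewrite ?epsn0 ?an0.
      by rewrite mul1r heps !mulr0 addr0.
    set z := W cost _ _; set g := goF _ _ _ _ _; lra.
have Hlb : has_lbound [set r : R | exists w, weighting_scheme t w /\ w [::] = r].
  exists 0 => r [w' [[H0 _] <-]]; apply: H0; by exists t.
apply: (le_trans (ge_inf Hlb (ex_intro _ w (conj WS erefl)))).
rewrite /w /=.
have [e [o [He Hb]]] := W_bound Hcost Hnn Hwf [::].
apply: (le_trans Hb).
have := HT (size e) (ex_intro _ e (conj (ex_intro _ o He) erefl)).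
have := HG (red_count red e) (ex_intro _ e (conj (ex_intro _ o He) erefl)).
rewrite -!(ler_nat R) /= => h1 h2.
have -> : red_count red [::] = 0%N by [].
rewrite subr0.
by apply: lerD; apply: ler_wpM2l => //; exact: ltW.
Qed.

Unset Implicit Arguments.

Theorem theorem6p4 (R : realType) (n : nat) (A : finType) (O : Type)
    (t : dtree n A O) (red : seq nat -> bool) (T G : nat) :
  dtree_wf t ->
  depth_is t T ->
  at_most_one_black t red ->
  max_red_is t red G ->
  WDT (R := R) t <= 3 * Num.sqrt ((G * T)%:R).
Proof.
move=> Hwf Hd Hb Hm.
have HGT : (G <= T)%N.
  case: Hm => [[pG [[o HpG] HrG]] _].
  rewrite -HrG; apply: (leq_trans (red_count_le red pG)).
  exact: (Hd.2 _ (ex_intro _ pG (conj (ex_intro _ o HpG) erefl))).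
have key := fun a => main_a (R := R) (a := a) Hwf Hd Hb Hm.
case: (posnP G) => [G0|Gpos].
  subst G; rewrite mul0n sqrtr0 mulr0.
  set x := WDT t in key *.
  rewrite leNgt; apply/negP => Hx.
  have Hd0 : 0 < x + T%:R by rewrite ltr_wpDr.
  have Ha0 : 0 < x / (x + T%:R) by rewrite divr_gt0.
  have Ha1 : x / (x + T%:R) <= 1 by rewrite ler_pdivrMr // mul1r lerDl.
  have := key _ Ha0 Ha1.
  rewrite mulr0 addr0 mulrAC ler_pdivlMr //.
  have : 0 <= T%:R :> R by [].
  nra.
have Tpos : (0 < T)%N by apply: leq_trans HGT.
have Tr : 0 < T%:R :> R by rewrite ltr0n.
have Gr : 0 < G%:R :> R by rewrite ltr0n.
have GTr : G%:R <= T%:R :> R by rewrite ler_nat.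
set s := Num.sqrt _.
have hs : s * s = G%:R * T%:R.
  by rewrite -expr2 sqr_sqrtr ?natrM // mulr_ge0 // ltW.
have s0 : 0 < s by rewrite sqrtr_gt0 natrM mulr_gt0.
have Ha0 : 0 < s / T%:R by rewrite divr_gt0.
have Ha1 : s / T%:R <= 1.
  rewrite ler_pdivrMr // mul1r; rewrite leNgt; apply/negP => H.
  have : T%:R * T%:R < s * s by apply: ltr_pM => //; apply: ltW.
  rewrite hs; nra.
apply: (le_trans (key _ Ha0 Ha1)).
have sn0 : s != 0 by rewrite gt_eqF.
have Tn0 : T%:R != 0 :> R by rewrite gt_eqF.
have e1 : s / T%:R * T%:R = s by rewrite mulfVK.
have e2 : 2 / (s / T%:R) * G%:R = 2 * (G%:R * T%:R / s).
  by field; rewrite sn0 Tn0.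
have e3 : G%:R * T%:R / s = s by rewrite -hs mulfK.
rewrite mulrBl e1 e2 e3 mul1r.
lra.
Qed.
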